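(* Let $P\in\{0,1\}^{k\times\ell}$ be a pattern with a row $r\in[k]$ and a column $c\in[\ell]$ such that $\mathrm{supp}(P)\subseteq(\{r\}\times[\ell])\cup([k]\times[c,\ell])$. Then every 1-entry of $P$ in $\{r\}\times[c]$ is row-bounding.
   Context: All matrices are binary; rows numbered top to bottom, columns left to right; $(i,j)$ is the entry in row $i$, column $j$; $\mathrm{supp}$ is the set of 1-entries; $[a,b]=\{a,\dots,b\}$, $[n]=[1,n]$. $M\Delta f$ is $M$ with the value of entry $f$ switched. An embedding of $P\in\{0,1\}^{k\times\ell}$ into $M\in\{0,1\}^{m\times n}$ is a map $\phi:[k]\times[\ell]\to[m]\times[n]$ sending 1-entries to 1-entries and such that if $e_1=(i_1,j_1)$, $e_2=(i_2,j_2)$ map to $(i_1^*,j_1^* )$, $(i_2^*,j_2^* )$, then $i_1<i_2\Rightarrow i_1^*<i_2^*$ and $j_1<j_2\Rightarrow j_1^*<j_2^*$. $M$ avoids $P$ if no embedding exists; $\mathrm{Av}(P)$ is the set of $P$-avoiding matrices. For a 1-entry $e$ of $P$ and $M\in\mathrm{Av}(P)$, a 0-entry $f$ of $M$ is critical for $e$ if some embedding of $P$ into $M\Delta f$ maps $e$ to $f$; a horizontal 0-run (maximal run of consecutive 0-entries in a row) is critical for $e$ if it contains a 0-entry critical for $e$. The 1-entry $e$ is row-bounding if there is a constant $K$ such that for every $M\in\mathrm{Av}(P)$ every row of $M$ contains at most $K$ horizontal 0-runs critical for $e$. *)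

(* Defs.v *)
(* Binary matrices are 'M[bool]_(m, n); rows/columns are
   0-based ordinals (row/column i of the paper is ordinal i-1). *)
From mathcomp Require Import all_boot all_order all_algebra.
Set Implicit Arguments. Unset Strict Implicit. Unset Printing Implicit Defensive.

Section Patterns.
Variables (k l m n : nat).

Definition is_embedding (P : 'M[bool]_(k, l)) (M : 'M[bool]_(m, n))
    (phi : {ffun 'I_k * 'I_l -> 'I_m * 'I_n}) : bool :=
  [forall e : 'I_k * 'I_l, P e.1 e.2 ==> M (phi e).1 (phi e).2] &&
  [forall e1 : 'I_k * 'I_l, forall e2 : 'I_k * 'I_l,
     ((e1.1 < e2.1)%N ==> ((phi e1).1 < (phi e2).1)%N) &&
     ((e1.2 < e2.2)%N ==> ((phi e1).2 < (phi e2).2)%N)].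

Definition contains (P : 'M[bool]_(k, l)) (M : 'M[bool]_(m, n)) : bool :=
  [exists phi, is_embedding P M phi].

Definition avoids (P : 'M[bool]_(k, l)) (M : 'M[bool]_(m, n)) : bool :=
  ~~ contains P M.

Definition flip_entry (M : 'M[bool]_(m, n)) (f : 'I_m * 'I_n) : 'M[bool]_(m, n) :=
  \matrix_(i, j) (if (i, j) == f then ~~ M i j else M i j).

Definition critical (P : 'M[bool]_(k, l)) (e : 'I_k * 'I_l)
    (M : 'M[bool]_(m, n)) (f : 'I_m * 'I_n) : bool :=
  ~~ M f.1 f.2 &&
  [exists phi, is_embedding P (flip_entry M f) phi && (phi e == f)].

Definition hrun (M : 'M[bool]_(m, n)) (i : 'I_m) (a b : 'I_n) : bool :=
  [&& (a <= b)%N,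
      [forall j : 'I_n, ((a <= j)%N && (j <= b)%N) ==> ~~ M i j],
      [forall j : 'I_n, (j.+1 == a :> nat) ==> M i j] &
      [forall j : 'I_n, (j == b.+1 :> nat) ==> M i j]].

Definition critical_hrun (P : 'M[bool]_(k, l)) (e : 'I_k * 'I_l)
    (M : 'M[bool]_(m, n)) (i : 'I_m) (a b : 'I_n) : bool :=
  hrun M i a b &&
  [exists j : 'I_n, [&& (a <= j)%N, (j <= b)%N & critical P e M (i, j)]].

Definition num_critical_hruns (P : 'M[bool]_(k, l)) (e : 'I_k * 'I_l)
    (M : 'M[bool]_(m, n)) (i : 'I_m) : nat :=
  #|[set ab : 'I_n * 'I_n | critical_hrun P e M i ab.1 ab.2]|.

End Patterns.

Definition row_bounding (k l : nat) (P : 'M[bool]_(k, l)) (e : 'I_k * 'I_l) : Prop :=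
  exists K : nat, forall (m n : nat) (M : 'M[bool]_(m, n)),
    avoids P M -> forall i : 'I_m, (num_critical_hruns P e M i <= K)%N.

(* Main.v *)
Require Import Defs.
From mathcomp Require Import all_boot all_order all_algebra.
From mathcomp Require Import zify.
Set Implicit Arguments. Unset Strict Implicit. Unset Printing Implicit Defensive.
Section Emb.
Variables (k l m n : nat) (P : 'M[bool]_(k, l)) (M : 'M[bool]_(m, n)).
Variable phi : {ffun 'I_k * 'I_l -> 'I_m * 'I_n}.
Hypothesis hphi : is_embedding P M phi.

Lemma emb_one (e : 'I_k * 'I_l) : P e.1 e.2 -> M (phi e).1 (phi e).2.
Proof. by case/andP: hphi => /forallP /(_ e) /implyP. Qed.

Lemma emb_row (e1 e2 : 'I_k * 'I_l) : (e1.1 < e2.1)%N -> ((phi e1).1 < (phi e2).1)%N.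
Proof. by case/andP: hphi => _ /forallP /(_ e1) /forallP /(_ e2) /andP [/implyP H _]. Qed.

Lemma emb_col (e1 e2 : 'I_k * 'I_l) : (e1.2 < e2.2)%N -> ((phi e1).2 < (phi e2).2)%N.
Proof. by case/andP: hphi => _ /forallP /(_ e1) /forallP /(_ e2) /andP [_ /implyP H]. Qed.

Lemma emb_inj (e1 e2 : 'I_k * 'I_l) : phi e1 = phi e2 -> e1 = e2.
Proof.
move=> E; case: e1 E => [a1 b1]; case: e2 => [a2 b2] E.
have ha : a1 = a2.
  apply: ord_inj; case: (ltngtP a1 a2) => // H.
  - by have := emb_row (e1:=(a1,b1)) (e2:=(a2,b2)) H; rewrite E ltnn.
  - by have := emb_row (e1:=(a2,b2)) (e2:=(a1,b1)) H; rewrite E ltnn.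
have hb : b1 = b2.
  apply: ord_inj; case: (ltngtP b1 b2) => // H.
  - by have := emb_col (e1:=(a1,b1)) (e2:=(a2,b2)) H; rewrite E ltnn.
  - by have := emb_col (e1:=(a2,b2)) (e2:=(a1,b1)) H; rewrite E ltnn.
by rewrite ha hb.
Qed.
End Emb.

Lemma is_embP k l m n (P : 'M[bool]_(k, l)) (M : 'M[bool]_(m, n)) (phi : {ffun 'I_k * 'I_l -> 'I_m * 'I_n}) :
  (forall e, P e.1 e.2 -> M (phi e).1 (phi e).2) ->
  (forall e1 e2 : 'I_k * 'I_l, (e1.1 < e2.1)%N -> ((phi e1).1 < (phi e2).1)%N) ->
  (forall e1 e2 : 'I_k * 'I_l, (e1.2 < e2.2)%N -> ((phi e1).2 < (phi e2).2)%N) ->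
  is_embedding P M phi.
Proof.
move=> h1 h2 h3; apply/andP; split.
  by apply/forallP => e; apply/implyP; apply: h1.
apply/forallP => e1; apply/forallP => e2; apply/andP; split; apply/implyP; [exact: h2|exact: h3].
Qed.

Lemma pair_ne k l (r : 'I_k) (j : 'I_l) (a : 'I_k) (b : 'I_l) :
  (a, b) != (r, j) -> a = r -> (b != j :> nat).
Proof. move=> ne ar; apply: contra ne => /eqP h; apply/eqP; rewrite ar; congr pair; exact: ord_inj. Qed.

Lemma core k l (P : 'M[bool]_(k, l)) (r : 'I_k) (c : 'I_l)
  (hsupp : forall (i : 'I_k) (j : 'I_l), P i j -> i = r \/ (c <= j)%N)
  (j : 'I_l) (hj : (j <= c)%N) m n (M : 'M[bool]_(m, n)) (i : 'I_m) (x : 'I_n)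
  (y : nat -> 'I_n) :
  critical P (r, j) M (i, x) ->
  (forall b, (b <= j)%N -> M i (y b)) ->
  (forall b, (b <= j)%N -> (y b < x)%N) ->
  (forall b1 b2, (b1 < b2)%N -> (b2 <= j)%N -> (y b1 < y b2)%N) ->
  contains P M.
Proof.
case/andP => hx0 /existsP [phi /andP [hphi /eqP hpe]] hM hyx hmono.
have hone : forall e, e != (r, j) -> P e.1 e.2 -> M (phi e).1 (phi e).2.
  move=> e ne he.
  have hne : phi e != (i, x).
    by apply: contra ne => /eqP; rewrite -hpe => /(emb_inj hphi) ->.
  by have := emb_one hphi he; rewrite mxE -surjective_pairing (negbTE hne).
have rlt : forall e : 'I_k * 'I_l, (e.1 < r)%N -> ((phi e).1 < i)%N.
  by move=> e h; have := emb_row hphi (e1:=e) (e2:=(r,j)) h; rewrite hpe.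
have rgt : forall e : 'I_k * 'I_l, (r < e.1)%N -> (i < (phi e).1)%N.
  by move=> e h; have := emb_row hphi (e1:=(r,j)) (e2:=e) h; rewrite hpe.
have clt : forall e : 'I_k * 'I_l, (e.2 < j)%N -> ((phi e).2 < x)%N.
  by move=> e h; have := emb_col hphi (e1:=e) (e2:=(r,j)) h; rewrite hpe.
have cgt : forall e : 'I_k * 'I_l, (j < e.2)%N -> (x < (phi e).2)%N.
  by move=> e h; have := emb_col hphi (e1:=(r,j)) (e2:=e) h; rewrite hpe.
case: (boolP [exists e : 'I_k * 'I_l, (e.2 < j)%N && (y j <= (phi e).2)%N]).
- move=> /existsP [e0 /andP [he0 hye0]].
  apply/existsP.
  exists [ffun e : 'I_k * 'I_l =>
            ((if (e.1 == r) && (e.2 <= j)%N then i else (phi e).1),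
             (if (e.2 < j)%N then y e.2
              else if (e.1 == r) && (e.2 == j :> nat) then y j else (phi e).2))].
  apply: is_embP.
  + move=> [a b] /= he; rewrite !ffunE /=.
    case: (ltnP b j) => hbj.
    * have ar : a = r by case: (hsupp a b he) => // hc; lia.
      by rewrite ar eqxx (ltnW hbj) /=; apply: hM; lia.
    * case: (eqVneq (a, b) (r, j)) => [[-> ->]|ne].
        by rewrite eqxx leqnn eqxx /=; apply: hM.
      have : ((a == r) && (b <= j)%N) = false.
        apply/negbTE/negP => /andP [/eqP ar hb]; have := pair_ne ne ar; lia.
      move=> ->.
      have : ((a == r) && (b == j :> nat)) = false.
        apply/negbTE/negP => /andP [/eqP ar hb]; have := pair_ne ne ar; lia.
      move=> ->.
      exact: (hone (a, b) ne he).
  + move=> [a1 b1] [a2 b2] /= h; rewrite !ffunE /=.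
    case: ifP => h1; case: ifP => h2.
    * move/andP: h1 => [/eqP h1 _]; move/andP: h2 => [/eqP h2 _]; subst; lia.
    * move/andP: h1 => [/eqP h1 _]; subst; apply: (rgt (a2, b2)) => /=; lia.
    * move/andP: h2 => [/eqP h2 _]; subst; apply: (rlt (a1, b1)) => /=; lia.
    * exact: (emb_row hphi (e1:=(a1,b1)) (e2:=(a2,b2))).
  + move=> [a1 b1] [a2 b2] /= h; rewrite !ffunE /=.
    case: (ltnP b1 j) => h1; case: (ltnP b2 j) => h2.
    * by apply: hmono => //; lia.
    * case: ifP => h3.
        by apply: hmono => //; lia.
      case: (ltngtP b2 j) => h4; first lia.
        have := cgt (a2, b2) h4; have := hyx b1 (ltnW h1); move=> A B; exact: ltn_trans A B.
      have E := emb_col hphi (e1:=e0) (e2:=(a2,b2)) (ltac:(rewrite /=; lia)).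
      have A := hmono b1 j h1 (leqnn j); exact: ltn_trans A (leq_ltn_trans hye0 E).
    * lia.
    * have hb2 : (j < b2)%N by lia.
      have -> : ((a2 == r) && (b2 == j :> nat)) = false.
        by apply/negbTE/negP => /andP [_ /eqP]; lia.
      case: ifP => h3.
        have := cgt (a2, b2) hb2; have := hyx j (leqnn j); move=> A B; exact: ltn_trans A B.
      exact: (emb_col hphi (e1:=(a1,b1)) (e2:=(a2,b2))).
- move=> hA.
  have hA' : forall e : 'I_k * 'I_l, (e.2 < j)%N -> ((phi e).2 < y j)%N.
    by move=> e h; move/existsPn: hA => /(_ e); rewrite h /= -ltnNge.
  apply/existsP; exists [ffun e => if e == (r, j) then (i, y j) else phi e].
  apply: is_embP.
  + move=> e he; rewrite !ffunE; case: eqVneq => [_|ne] /=.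
      by apply: hM.
    exact: hone.
  + move=> e1 e2 h; rewrite !ffunE.
    case: eqVneq => [E1|n1]; case: eqVneq => [E2|n2]; rewrite ?E1 ?E2 /= in h *.
    * lia.
    * exact: (rgt e2).
    * exact: (rlt e1).
    * exact: (emb_row hphi).
  + move=> e1 e2 h; rewrite !ffunE.
    case: eqVneq => [E1|n1]; case: eqVneq => [E2|n2]; rewrite ?E1 ?E2 /= in h *.
    * lia.
    * have := cgt e2 h; have := hyx j (leqnn j); move=> A B; exact: ltn_trans A B.
    * exact: (hA' e1).
    * exact: (emb_col hphi).
Qed.

Lemma hrun_uniq m n (M : 'M[bool]_(m, n)) (i : 'I_m) (a b b' : 'I_n) :
  hrun M i a b -> hrun M i a b' -> b = b'.
Proof.
wlog hbb : b b' / (b <= b')%N.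
  move=> W h1 h2; case: (leqP b b') => h; first exact: W.
  by apply/esym/W => //; apply: ltnW.
case/and4P => hab /forallP hz1 /forallP hl1 /forallP hr1.
case/and4P => hab' /forallP hz2 /forallP hl2 /forallP hr2.
apply: ord_inj; case: (ltngtP b b') => // hlt; first last.
  lia.
have hb1 : (b.+1 < n)%N by have := ltn_ord b'; lia.
have := hr1 (Ordinal hb1); rewrite /= eqxx /= => H1.
have := hz2 (Ordinal hb1); rewrite /=.
have -> : ((a <= b.+1)%N && (b.+1 <= b')%N) by apply/andP; split; lia.
by rewrite H1.
Qed.

Theorem lemma3p8 (k l : nat) (P : 'M[bool]_(k, l)) (r : 'I_k) (c : 'I_l)
  (hsupp : forall (i : 'I_k) (j : 'I_l), P i j -> i = r \/ (c <= j)%N) :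
  forall j : 'I_l, (j <= c)%N -> P r j -> row_bounding P (r, j).
Proof.
move=> j hj _; exists j.+1 => m n M hav i.
rewrite /num_critical_hruns; set S := [set ab : 'I_n * 'I_n | _].
rewrite leqNgt; apply/negP => hS.
set A := [set ab.1 | ab in S].
have cA : #|A| = #|S|.
  apply: card_in_imset => ab1 ab2; rewrite !inE => /andP [h1 _] /andP [h2 _] E.
  case: ab1 ab2 E h1 h2 => a1 b1 [a2 b2] /= E; subst a2 => h1 h2.
  by rewrite (hrun_uniq h1 h2).
have [ab0 hab0] : exists ab0, ab0 \in S.
  by apply/set0Pn; rewrite -card_gt0; lia.
have hA0 : ab0.1 \in A by apply: imset_f.
case: (@arg_maxnP _ ab0.1 (mem A) val hA0) => amax hamax hmax.
case/imsetP: hamax => [[a b] habS /= Ea]; subst amax.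
move: (habS); rewrite inE /= => /andP [hr /existsP [x /and3P [hax hxb hcrit]]].
set Ones := [set z : 'I_n | M i z && (z < a)%N].
set Z := [set z : 'I_n | (z : nat) == 0].
set A' := A :\: Z.
have cZ : #|A :&: Z| <= 1.
  apply/card_le1_eqP => u v; rewrite !inE => /andP [_ /eqP hu] /andP [_ /eqP hv].
  by apply: ord_inj; rewrite hu hv.
have cA' : (#|A| <= #|A'| + 1)%N by have := cardsID Z A; rewrite -/A'; move: cZ; lia.
pose g (z : 'I_n) : 'I_n := insubd z z.-1.
have vg : forall z : 'I_n, val (g z) = z.-1.
  by move=> z; rewrite val_insubd; have := ltn_ord z; case: ifP => //; lia.
have cg : #|[set g z | z in A']| = #|A'|.
  apply: card_in_imset => u v; rewrite !inE => /andP [hu _] /andP [hv _] E.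
  apply: ord_inj; have := vg u; have := vg v; rewrite E.
  move: hu hv; rewrite /Z ?inE; move=> h1 h2 h3 h4; lia.
have sub : [set g z | z in A'] \subset Ones.
  apply/subsetP => w /imsetP [z hz ->]; move: hz; rewrite !inE => /andP [hz0 hzA].
  have hzA' := hzA.
  case/imsetP: hzA => [[a2 b2] hab2 /= Ez]; subst z.
  move: hab2; rewrite inE /= => /andP [/and4P [_ _ /forallP hl _] _].
  have := hl (g a2); rewrite vg; have -> : (a2.-1.+1 == a2) by lia.
  move=> /= ->; rewrite /=.
  have := hmax a2 hzA'; move=> H; have : (a2 <= a)%N := H; lia.
have cOnes : (j.+1 <= #|Ones|)%N.
  have := subset_leq_card sub; rewrite cg; lia.
set s := [seq z <- enum 'I_n | z \in Ones].
have ss : size s = #|Ones| by rewrite /s cardE enumT /enum_mem.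
have srt : sorted (relpre val ltn) s.
  apply: sorted_filter; first by move=> u v w; apply: ltn_trans.
  by rewrite -sorted_map val_enum_ord iota_ltn_sorted.
pose y (b : nat) := nth x s b.
have yin : forall b, (b <= j)%N -> y b \in Ones.
  move=> b0 hb; have : y b0 \in s by apply: mem_nth; rewrite ss; lia.
  by rewrite mem_filter => /andP [].
move: hav; rewrite /avoids => /negP hav; apply: hav; apply: (core hsupp hj (y := y) hcrit).
- by move=> b0 hb; have := yin b0 hb; rewrite inE => /andP [].
- by move=> b0 hb; have := yin b0 hb; rewrite inE => /andP [_]; lia.
- move=> b1 b2 h12 hb2.
  have := sorted_ltn_nth (leT := relpre val ltn) (fun u v w => @ltn_trans _ _ _) x srt.
  move=> /(_ b1 b2); rewrite !inE; move=> H; apply: H; rewrite ?ss; lia.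
Qed.
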